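(* Let $p$ be a prime and $\sigma:\mathcal A_m\to\mathcal A_m^*$ a $p$-uniform morphism. For every $n\in\mathbb{N}$, $$R_{n+1}(T)=M_\sigma(T^{p^n})R_n(T),$$ where $R_n(T)$ is the column vector $(P_{\sigma^n(0)}(T),\dots,P_{\sigma^n(m-1)}(T))^{\mathsf T}$.
   Context: $\mathcal A_m=\{0,\dots,m-1\}$, letters viewed in $\mathbb{F}_p$. For $W=w_0\cdots w_{r-1}$, $P_W(T)=\sum_{j=0}^{r-1}w_{r-1-j}T^j$, and $\beta_{W,j}(T)=\sum_{i:\,w_i=j}T^{r-1-i}\in\mathbb{F}_p[T]$ (zero if $j$ does not occur). The matrix associated with $\sigma$ is the $m\times m$ matrix $M_\sigma(T)=(\beta_{\sigma(i),j}(T))_{0\le i,j\le m-1}$ with entries in $\mathbb{F}_p[T]$. A $p$-uniform morphism sends each letter to a word of length $p$. *)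

(* Defs.v *)
From HB Require Import structures.
From mathcomp Require Import all_boot all_order all_algebra.
Set Implicit Arguments. Unset Strict Implicit. Unset Printing Implicit Defensive.
Import GRing.Theory.
Local Open Scope ring_scope.

Definition morph_word (m : nat) (sigma : 'I_m -> seq 'I_m) (w : seq 'I_m) : seq 'I_m :=
  flatten (map sigma w).

Definition morph_iter (m : nat) (sigma : 'I_m -> seq 'I_m) (n : nat) (a : 'I_m) : seq 'I_m :=
  iter n (morph_word sigma) [:: a].

Definition p_uniform (p m : nat) (sigma : 'I_m -> seq 'I_m) : Prop :=
  forall a : 'I_m, size (sigma a) = p.

Definition Pw (p m : nat) (W : seq 'I_m) : {poly 'F_p} :=
  let ws := map (fun a : 'I_m => (nat_of_ord a)%:R : 'F_p) W in
  \sum_(j < size W) ws`_(size W - 1 - j) *: 'X^j.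

Definition betaw (p m : nat) (W : seq 'I_m) (j : 'I_m) : {poly 'F_p} :=
  \sum_(i < size W | nth 0%N (map (@nat_of_ord m) W) i == nat_of_ord j) 'X^(size W - 1 - i).

Definition Msigma (p m : nat) (sigma : 'I_m -> seq 'I_m) : 'M[{poly 'F_p}]_m :=
  \matrix_(i < m, j < m) betaw p (sigma i) j.

Definition Rvec (p m : nat) (sigma : 'I_m -> seq 'I_m) (n : nat) : 'cV[{poly 'F_p}]_m :=
  \col_(i < m) Pw p (morph_iter sigma n i).

(* Main.v *)
Require Import Defs.
From HB Require Import structures.
From mathcomp Require Import all_boot all_order all_algebra.
Import GRing.Theory.
Local Open Scope ring_scope.

Section Aux.
Variables (p m : nat).

Lemma Pw_cons (a : 'I_m) (w : seq 'I_m) :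
  Pw p (a :: w) = ((nat_of_ord a)%:R : 'F_p) *: 'X^(size w) + Pw p w.
Proof.
rewrite /Pw /= big_ord_recr /= subn1 /= subnn /= addrC; congr (_ + _).
apply: eq_bigr => j _ /=.
have hj := ltn_ord j.
have -> : (size w - j = (size w - 1 - j).+1)%N by rewrite -subnDA add1n subnSK.
by [].
Qed.

Lemma Pw_cat (u v : seq 'I_m) :
  Pw p (u ++ v) = Pw p u * 'X^(size v) + Pw p v.
Proof.
elim: u => [|a u IH] /=.
  by rewrite /Pw big_ord0 mul0r add0r.
rewrite !Pw_cons IH size_cat mulrDl addrA; congr (_ + _ + _).
by rewrite exprD -scalerAl.
Qed.

Lemma betaw_cons (a : 'I_m) (w : seq 'I_m) (j : 'I_m) :
  betaw p (a :: w) j = (if a == j then 'X^(size w) else 0) + betaw p w j.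
Proof.
rewrite /betaw /= big_mkcond big_ord_recl /= subn1 /= subn0.
congr (_ + _).
rewrite [RHS]big_mkcond; apply: eq_bigr => i _ /=.
by rewrite add0n /bump leq0n add1n -subnDA add1n.
Qed.

Lemma Xn_comp (k : nat) (q : {poly 'F_p}) : 'X^k \Po q = q ^+ k.
Proof.
elim: k => [|k IH]; first by rewrite !expr0 comp_polyC.
by rewrite !exprS comp_polyM comp_polyX IH.
Qed.

Lemma key (f : 'I_m -> seq 'I_m) (L : nat) (hf : forall a, size (f a) = L)
  (w : seq 'I_m) :
  Pw p (flatten (map f w)) =
  \sum_(j < m) (betaw p w j \Po 'X^L) * Pw p (f j).
Proof.
elim: w => [|a w IH] /=.
  rewrite /Pw big_ord0 big1 // => j _.
  by rewrite /betaw big_ord0 comp_poly0 mul0r.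
have hs : size (flatten (map f w)) = (L * size w)%N.
  elim: w {IH} => [|b w IHw] /=; first by rewrite muln0.
  by rewrite size_cat IHw hf mulnS.
rewrite Pw_cat IH hs.
under eq_bigr => j _ do rewrite betaw_cons comp_polyD mulrDl.
rewrite big_split /=; congr (_ + _).
rewrite (bigD1 a) //= eqxx big1 ?addr0.
  by rewrite Xn_comp -exprM mulrC mulnC.
by move=> j /negbTE; rewrite eq_sym => ->; rewrite comp_poly0 mul0r.
Qed.

Lemma morph_flatten (sigma : 'I_m -> seq 'I_m) (ss : seq (seq 'I_m)) :
  morph_word sigma (flatten ss) = flatten (map (morph_word sigma) ss).
Proof.
elim: ss => [|s ss IH] //=.
by rewrite /morph_word map_cat flatten_cat; congr (_ ++ _); exact: IH.
Qed.

Lemma iter_morph (sigma : 'I_m -> seq 'I_m) (n : nat) (w : seq 'I_m) :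
  iter n (morph_word sigma) w = flatten (map (morph_iter sigma n) w).
Proof.
elim: n => [|n IH] /=.
  by rewrite /morph_iter /=; elim: w => //= a w IHw; rewrite -IHw.
rewrite IH morph_flatten -map_comp.
by [].
Qed.

Lemma size_morph_iter (sigma : 'I_m -> seq 'I_m) (hu : p_uniform p sigma) n a :
  size (morph_iter sigma n a) = (p ^ n)%N.
Proof.
rewrite /morph_iter; elim: n => [|n IH] /=; first by [].
have H : forall w : seq 'I_m, size (morph_word sigma w) = (p * size w)%N.
  elim=> [|b w IHw] /=; first by rewrite muln0.
  by rewrite /morph_word /= size_cat -/(morph_word _ _) IHw hu mulnS.
by rewrite H IH expnS.
Qed.

End Aux.

Theorem lemma4p9 (p m : nat) (hp : prime p) (sigma : 'I_m -> seq 'I_m)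
  (hunif : p_uniform p sigma) (n : nat) :
  Rvec p sigma n.+1 =
  map_mx (fun q : {poly 'F_p} => q \Po 'X^(p ^ n)) (Msigma p sigma) *m Rvec p sigma n.
Proof.
apply/matrixP => i k; rewrite !mxE.
have -> : morph_iter sigma n.+1 i = flatten (map (morph_iter sigma n) (sigma i)).
  rewrite /morph_iter iterSr -/(morph_iter _ _ _).
  by rewrite iter_morph /morph_word /= cats0.
rewrite (@key _ _ _ (p ^ n)%N); last by move=> a; apply: size_morph_iter.
by apply: eq_bigr => j _; rewrite !mxE.
Qed.
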